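(* Let $J:[0,1]\to\mathbb{R}$ be continuous with $J(0)=J(1)=0$, twice differentiable on $(0,1)$ with $J''(p)<0$ for all $p\in(0,1)$. For $p_0,a\in(0,1)$ define the Bayes risk error divergence $$d(p_0\|a)=-J(p_0)+J(a)+(p_0-a)J'(a).$$ Fix a cell $[b_{k-1},b_k]$ with $0\le b_{k-1}<b_k\le 1$. Then the problem $$\min_{a\in(b_{k-1},b_k)}\ \max_{p_0\in[b_{k-1},b_k]} d(p_0\|a)$$ is solved by the (unique) point $a_k\in(b_{k-1},b_k)$ satisfying $$J'(a_k)=\frac{J(b_k)-J(b_{k-1})}{b_k-b_{k-1}}.$$
   Context: In binary hypothesis testing with prior $p_0=\Pr[H=h_0]$, costs $c_{10},c_{01}>0$ and deterministic likelihood ratio test decision rules, $J(p_0)=c_{10}p_0p_E^{\mathrm{I}}(p_0)+c_{01}(1-p_0)p_E^{\mathrm{II}}(p_0)$ is the Bayes risk, which is zero at $p_0\in\{0,1\}$, positive, continuous and strictly concave on $(0,1)$. A decision weight $a$ is the prior value used in the likelihood ratio test threshold; the mismatched Bayes risk is $J(p_0,a)=J(a)+(p_0-a)J'(a)$, and $d(p_0\|a)=J(p_0,a)-J(p_0)$. For the theorem only the stated analytic properties of $J$ are used. *)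

(* Defs.v *)
From Stdlib Require Import Reals Lra.
Open Scope R_scope.

Definition brd (J J' : R -> R) (p0 a : R) : R :=
  - J p0 + J a + (p0 - a) * J' a.

Definition is_max_on (S : R -> Prop) (f : R -> R) (m : R) : Prop :=
  (exists p, S p /\ f p = m) /\ (forall p, S p -> f p <= m).

(* Main.v *)
Require Import Defs.
From Stdlib Require Import Reals Lra.
Open Scope R_scope.

Definition clampR (x y t : R) := Rmax x (Rmin y t).

Lemma clampR_id x y t : x <= t <= y -> clampR x y t = t.
Proof. intros. unfold clampR, Rmax, Rmin; repeat destruct Rle_dec; lra. Qed.

Lemma clampR_range x y t : x <= y -> x <= clampR x y t <= y.
Proof. intros. unfold clampR, Rmax, Rmin; repeat destruct Rle_dec; lra. Qed.

Lemma clampR_lip x y t c : x <= y -> x <= c <= y -> Rabs (clampR x y t - c) <= Rabs (t - c).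
Proof.
  intros. unfold clampR, Rmax, Rmin; repeat destruct Rle_dec;
  unfold Rabs; repeat destruct Rcase_abs; lra.
Qed.

Lemma mvtJ (J J' : R -> R)
  (Hcont : forall x, 0 <= x <= 1 -> limit1_in J (fun y => 0 <= y <= 1) (J x) x)
  (HJ' : forall p, 0 < p < 1 -> derivable_pt_lim J p (J' p))
  x y : 0 <= x -> x < y -> y <= 1 ->
  exists c, x < c < y /\ J y - J x = J' c * (y - x).
Proof.
  intros hx hxy hy.
  pose (f := fun t => J (clampR x y t)).
  assert (Hd : forall t, x < t < y -> derivable_pt_lim f t (J' t)).
  { intros t Ht.
    intros eps Heps. destruct (HJ' t ltac:(lra) eps Heps) as [d Hd].
    assert (hm : 0 < Rmin d (Rmin (t - x) (y - t))).
    { apply Rmin_pos; [apply cond_pos| apply Rmin_pos; lra]. }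
    exists (mkposreal _ hm). intros h hh0 hh. simpl in hh.
    assert (Rabs h < Rmin (t - x) (y - t)).
    { eapply Rlt_le_trans; [apply hh| apply Rmin_r]. }
    assert (Rabs h < t - x) by (eapply Rlt_le_trans; [eassumption| apply Rmin_l]).
    assert (Rabs h < y - t) by (eapply Rlt_le_trans; [exact H| apply Rmin_r]).
    unfold f. rewrite !clampR_id.
    + apply Hd; auto. eapply Rlt_le_trans; [apply hh| apply Rmin_l].
    + lra.
    + revert H0 H1. unfold Rabs; destruct Rcase_abs; lra. }
  assert (Hc : forall t, x <= t <= y -> continuity_pt f t).
  { intros t Ht.
    intros eps Heps. destruct (Hcont t ltac:(lra) eps Heps) as [alp [Ha Hal]].
    exists alp. split; auto. intros z [_ Hz].
    unfold f. simpl in *. unfold R_dist in *.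
    rewrite (clampR_id x y t) by lra.
    apply Hal. split.
    + pose proof (clampR_range x y z). lra.
    + eapply Rle_lt_trans; [apply clampR_lip; lra| exact Hz]. }
  destruct (MVT f id x y (fun c P => exist _ (J' c) (Hd c P))
     (fun c _ => derivable_pt_id c) hxy Hc
     (fun c _ => derivable_continuous_pt _ _ (derivable_pt_id c))) as [c [P Heq]].
  rewrite derive_pt_id in Heq. simpl in Heq.
  unfold f in Heq. rewrite !clampR_id in Heq by lra.
  exists c. split; auto. unfold id in Heq. lra.
Qed.

Lemma J'dec (J' J'' : R -> R)
  (HJ'' : forall p, 0 < p < 1 -> derivable_pt_lim J' p (J'' p))
  (Hconc : forall p, 0 < p < 1 -> J'' p < 0)
  x y : 0 < x -> x < y -> y < 1 -> J' y < J' x.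
Proof.
  intros. destruct (MVT_cor2 J' J'' x y) as [c [Hc Hc2]]; auto.
  intros c Hc. apply HJ''. lra.
  pose proof (Hconc c ltac:(lra)). nra.
Qed.

Theorem theorem1 (J J' J'' : R -> R)
  (* J continuous on [0,1] (relative to [0,1]) *)
  (Hcont : forall x, 0 <= x <= 1 -> limit1_in J (fun y => 0 <= y <= 1) (J x) x)
  (H0 : J 0 = 0) (H1 : J 1 = 0)
  (* J twice differentiable on (0,1), with derivative J' and second derivative J'' *)
  (HJ' : forall p, 0 < p < 1 -> derivable_pt_lim J p (J' p))
  (HJ'' : forall p, 0 < p < 1 -> derivable_pt_lim J' p (J'' p))
  (Hconc : forall p, 0 < p < 1 -> J'' p < 0)
  (bl br : R) (Hb0 : 0 <= bl) (Hb : bl < br) (Hb1 : br <= 1) :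
  exists ak,
    (bl < ak < br
     /\ J' ak = (J br - J bl) / (br - bl)
     /\ (exists M, is_max_on (fun p => bl <= p <= br) (fun p => brd J J' p ak) M
           /\ forall a Ma, bl < a < br ->
                is_max_on (fun p => bl <= p <= br) (fun p => brd J J' p a) Ma ->
                M <= Ma))
    /\ (forall a', bl < a' < br -> J' a' = (J br - J bl) / (br - bl) -> a' = ak).
Proof.
  pose proof (mvtJ J J' Hcont HJ') as MV.
  pose proof (J'dec J' J'' HJ'' Hconc) as DEC.
  destruct (MV bl br Hb0 Hb Hb1) as [ak [Hak Heq]].
  assert (Hs : J' ak = (J br - J bl) / (br - bl)).
  { rewrite Heq. field. lra. }
  exists ak. split; [split; [exact Hak| split; [exact Hs|]]|].
  - exists (brd J J' bl ak). split.
    + split. { exists bl. split; auto; lra. }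
      intros p Hp. unfold brd.
      destruct (Req_dec p bl) as [->|nbl]; [lra|].
      destruct (Rle_lt_dec p ak).
      * destruct (MV bl p) as [c [Hc Hc2]]; try lra.
        destruct (Req_dec c ak) as [e|ne]; [lra|].
        pose proof (DEC c ak ltac:(lra) ltac:(lra) ltac:(lra)). nra.
      * destruct (Req_dec p br) as [->|nbr]; [lra|].
        destruct (MV p br) as [c [Hc Hc2]]; try lra.
        pose proof (DEC ak c ltac:(lra) ltac:(lra) ltac:(lra)). nra.
    + intros a Ma Ha [_ Hm].
      pose proof (Hm bl ltac:(lra)) as Mbl. pose proof (Hm br ltac:(lra)) as Mbr.
      unfold brd in *.
      destruct (Rtotal_order a ak) as [lt|[e|gt]].
      * destruct (MV a ak) as [c [Hc Hc2]]; try lra.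
        pose proof (DEC a c ltac:(lra) ltac:(lra) ltac:(lra)).
        pose proof (DEC c ak ltac:(lra) ltac:(lra) ltac:(lra)).
        assert (J br - J bl = J' ak * (br - bl)) by lra.
        nra.
      * subst. lra.
      * destruct (MV ak a) as [c [Hc Hc2]]; try lra.
        pose proof (DEC ak c ltac:(lra) ltac:(lra) ltac:(lra)).
        pose proof (DEC c a ltac:(lra) ltac:(lra) ltac:(lra)).
        nra.
  - intros a' Ha' Hs'.
    destruct (Rtotal_order a' ak) as [lt|[e|gt]]; auto.
    + pose proof (DEC a' ak ltac:(lra) ltac:(lra) ltac:(lra)). lra.
    + pose proof (DEC ak a' ltac:(lra) ltac:(lra) ltac:(lra)). lra.
Qed.
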